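(* Let $u,v\ge0$ be integers and let $\beta^{i,j}$ ($0\le i\le u$, $0\le j\le v+1$) be integers such that: (1) all $\beta^{i,j}$ are nonnegative; (2) $\beta^{0,0},\beta^{0,1},\ldots,\beta^{0,v}$ are strictly positive; (3) $\beta^{0,v+1}=0$; (4) for each $0\le i\le u-1$ and $0\le j\le v$, $$\delta^{i,j}:=\beta^{i,j}+\beta^{i+1,j+1}-\beta^{i,j+1}-\beta^{i+1,j}\le0.$$ Then $\beta^{i,j}>0$ for all $0\le i\le u$ and $0\le j\le v$. *)

(* Defs.v *)
From Stdlib Require Import ZArith Lia.
Open Scope Z_scope.

Definition delta (beta : nat -> nat -> Z) (i j : nat) : Z :=
  beta i j + beta (S i) (S j) - beta i (S j) - beta (S i) j.

(* Main.v *)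
Require Import Defs.
From Stdlib Require Import ZArith Lia.
Open Scope Z_scope.

Lemma step (u v : nat) (beta : nat -> nat -> Z)
  (H4 : forall i j, (i + 1 <= u)%nat -> (j <= v)%nat -> delta beta i j <= 0) :
  forall i n, (i + 1 <= u)%nat -> (n <= S v)%nat ->
  beta (S i) (S v) - beta (S i) (S v - n)%nat <= beta i (S v) - beta i (S v - n)%nat.
Proof.
  intros i n Hi. induction n as [|n IH]; intros Hn.
  - replace (S v - 0)%nat with (S v) by lia. lia.
  - specialize (IH ltac:(lia)).
    assert (Hd := H4 i (S v - S n)%nat Hi ltac:(lia)).
    unfold delta in Hd.
    replace (S (S v - S n)) with (S v - n)%nat in Hd by lia. lia.
Qed.

Theorem lemma4p6 (u v : nat) (beta : nat -> nat -> Z)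
  (H1 : forall i j, (i <= u)%nat -> (j <= S v)%nat -> 0 <= beta i j)
  (H2 : forall j, (j <= v)%nat -> 0 < beta 0%nat j)
  (H3 : beta 0%nat (S v) = 0)
  (H4 : forall i j, (i + 1 <= u)%nat -> (j <= v)%nat -> delta beta i j <= 0) :
  forall i j, (i <= u)%nat -> (j <= v)%nat -> 0 < beta i j.
Proof.
  assert (A : forall i j, (i <= u)%nat -> (j <= S v)%nat ->
            beta i (S v) - beta i j <= beta 0%nat (S v) - beta 0%nat j).
  { induction i as [|i IH]; intros j Hi Hj; [lia|].
    pose proof (step u v beta H4 i (S v - j)%nat ltac:(lia) ltac:(lia)) as Hs.
    replace (S v - (S v - j))%nat with j in Hs by lia.
    specialize (IH j ltac:(lia) Hj). lia. }
  intros i j Hi Hj.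
  pose proof (A i j Hi ltac:(lia)). pose proof (H1 i (S v) Hi ltac:(lia)).
  pose proof (H2 j Hj). lia.
Qed.
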